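(* Let $\Omega$ be a verification operator for $|\Psi\rangle$ with second largest eigenvalue $\beta$ and smallest eigenvalue $\tau$, and let $0<\epsilon<1$, $0<\delta\le1/2$. Then $F(1,\delta,\Omega)\ge1-\epsilon$ (i.e. $\Omega$ verifies the target state within infidelity $\epsilon$ and significance level $\delta$ using a single test) iff $$0<\beta<\delta\quad\text{and}\quad\frac{\tau(\delta-\beta)}{1+\tau-2\beta}\ge\delta(1-\epsilon).$$
   Context: Let $\mathcal H$ be a Hilbert space of finite dimension $D\ge2$ and $|\Psi\rangle\in\mathcal H$ a unit vector. A verification operator for $|\Psi\rangle$ is a Hermitian operator $\Omega$ on $\mathcal H$ with $0\le\Omega\le1$, $\Omega|\Psi\rangle=|\Psi\rangle$, whose eigenvalue $1$ is nondegenerate. For a density operator $\rho$ on $\mathcal H^{\otimes2}$ put $p_\rho=\mathrm{tr}[(\Omega\otimes1)\rho]$, $f_\rho=\mathrm{tr}[(\Omega\otimes|\Psi\rangle\langle\Psi|)\rho]$, and $F(1,\delta,\Omega)=\min\{f_\rho/p_\rho:p_\rho\ge\delta\}$, the minimum over permutation-invariant density operators on $\mathcal H^{\otimes2}$. *)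

(* Defs.v *)
From HB Require Import structures.
From mathcomp Require Import all_boot all_order all_algebra.
From mathcomp Require Import complex mxtens.
From mathcomp Require Import classical_sets reals.
Set Implicit Arguments. Unset Strict Implicit. Unset Printing Implicit Defensive.
Import Order.TTheory GRing.Theory Num.Theory.
Local Open Scope ring_scope.
Local Open Scope classical_set_scope.
Local Open Scope complex_scope.

Section QV.
Variable R : rcfType.
Local Notation C := R[i].

Definition adjmx {m n} (A : 'M[C]_(m, n)) : 'M[C]_(n, m) := map_mx Num.conj A^T.

Definition hermitian {n} (A : 'M[C]_n) : Prop := adjmx A = A.

(* positive semidefinite: <v|A|v> >= 0 (in particular real) for every v *)
Definition psd {n} (A : 'M[C]_n) : Prop :=
  forall v : 'cV[C]_n, 0 <= (adjmx v *m A *m v) 0 0.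

Definition unit_vector {n} (v : 'cV[C]_n) : Prop := (adjmx v *m v) 0 0 = 1.

Definition ketbra {n} (v : 'cV[C]_n) : 'M[C]_n := v *m adjmx v.

Definition verification_operator {D} (Om : 'M[C]_D) (psi : 'cV[C]_D) : Prop :=
  [/\ unit_vector psi, hermitian Om, psd Om /\ psd (1%:M - Om),
      Om *m psi = psi & \rank (eigenspace Om 1) = 1%N].

Definition density {n} (rho : 'M[C]_n) : Prop := psd rho /\ \tr rho = 1.

(* swap operator on H (x) H, |i>|j> |-> |j>|i> *)
Definition swapmx D : 'M[C]_(D * D) :=
  \matrix_(i, j) (((mxtens_unindex i).1 == (mxtens_unindex j).2)
                  && ((mxtens_unindex i).2 == (mxtens_unindex j).1))%:R.

Definition perm_invariant {D} (rho : 'M[C]_(D * D)) : Prop :=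
  swapmx D *m rho *m swapmx D = rho.

Definition p_rho {D} (Om : 'M[C]_D) (rho : 'M[C]_(D * D)) : C :=
  \tr ((Om *t (1%:M : 'M[C]_D)) *m rho).

Definition f_rho {D} (Om : 'M[C]_D) (psi : 'cV[C]_D) (rho : 'M[C]_(D * D)) : C :=
  \tr ((Om *t ketbra psi) *m rho).

End QV.

(* F(1, delta, Omega): the minimum (here: infimum; the minimum is attained)
   of f_rho / p_rho over permutation-invariant density operators rho on
   H (x) H with p_rho >= delta. *)
Definition F1 (R : realType) {D} (delta : R) (Om : 'M[R[i]]_D) (psi : 'cV[R[i]]_D) : R :=
  inf [set x : R | exists rho : 'M[R[i]]_(D * D),
         [/\ density rho, perm_invariant rho, delta%:C <= p_rho Om rho
           & x%:C = f_rho Om psi rho / p_rho Om rho]].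

(* Main.v *)
Require Import Defs.
From HB Require Import structures.
From mathcomp Require Import all_boot all_order all_algebra.
From mathcomp Require Import complex mxtens spectral.
From mathcomp Require Import classical_sets reals.
From mathcomp Require Import ring lra.
Import Order.TTheory GRing.Theory Num.Theory.
Local Open Scope ring_scope.
Local Open Scope complex_scope.
Set Implicit Arguments. Unset Strict Implicit. Unset Printing Implicit Defensive.

Section Gen.
Variable R : rcfType.
Local Notation C := R[i].

Lemma adjmxE m n (A : 'M[C]_(m, n)) i j : adjmx A i j = Num.conj (A j i).
Proof. by rewrite /adjmx !mxE. Qed.

Lemma adjmxK m n (A : 'M[C]_(m, n)) : adjmx (adjmx A) = A.
Proof. by apply/matrixP => i j; rewrite !adjmxE conjCK. Qed.

Lemma adjmxM m n p (A : 'M[C]_(m, n)) (B : 'M[C]_(n, p)) :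
  adjmx (A *m B) = adjmx B *m adjmx A.
Proof.
apply/matrixP => i j; rewrite adjmxE !mxE rmorph_sum; apply: eq_bigr => k _.
by rewrite !adjmxE rmorphM mulrC.
Qed.

Lemma adjmxD m n (A B : 'M[C]_(m, n)) : adjmx (A + B) = adjmx A + adjmx B.
Proof. by apply/matrixP => i j; rewrite !(adjmxE, mxE) rmorphD. Qed.

Lemma adjmx1 n : adjmx (1%:M : 'M[C]_n) = 1%:M.
Proof. by apply/matrixP => i j; rewrite adjmxE !mxE eq_sym rmorph_nat. Qed.

Lemma adjmxT m n p q (A : 'M[C]_(m, n)) (B : 'M[C]_(p, q)) :
  adjmx (A *t B) = adjmx A *t adjmx B.
Proof.
apply/matrixP => i j; case: (mxtens_indexP i) => i1 i2; case: (mxtens_indexP j) => j1 j2.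
by rewrite adjmxE !tensmxE !adjmxE rmorphM.
Qed.

Lemma tens1mx m n : (1%:M : 'M[C]_m) *t (1%:M : 'M[C]_n) = 1%:M.
Proof.
apply/matrixP => i j; case: (mxtens_indexP i) => i1 i2; case: (mxtens_indexP j) => j1 j2.
rewrite tensmxE !mxE -natrM; congr (_%:R).
rewrite (inj_eq (can_inj (@mxtens_indexK _ _))) xpair_eqE.
by case: (i1 == j1); case: (i2 == j2).
Qed.

Lemma psd_diag n m (M : 'M[C]_n) (X : 'M[C]_(m, n)) k :
  psd M -> 0 <= (X *m M *m adjmx X) k k.
Proof.
move=> /(_ (adjmx (row k X))); rewrite adjmxK.
suff -> : (row k X *m M *m adjmx (row k X)) 0 0 = (X *m M *m adjmx X) k k by [].
rewrite -!row_mul !mxE; apply: eq_bigr => l _; rewrite !adjmxE !mxE.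
by [].
Qed.

Lemma sum_pick n (f : 'I_n) (F : 'I_n -> C) :
  \sum_l ((l == f)%:R * F l) = F f.
Proof.
rewrite (bigD1 f) //= eqxx mul1r big1 ?addr0 // => l /negbTE ->; by rewrite mul0r.
Qed.

Lemma sum_pick' n (f : 'I_n) (F : 'I_n -> C) :
  \sum_l (F l * (l == f)%:R) = F f.
Proof. by rewrite -(sum_pick f F); apply: eq_bigr => l _; rewrite mulrC. Qed.

Definition sw D (k : 'I_(D * D)) : 'I_(D * D) :=
  mxtens_index ((mxtens_unindex k).2, (mxtens_unindex k).1).

Lemma swK D : involutive (@sw D).
Proof.
move=> k; rewrite /sw mxtens_indexK /=.
exact: mxtens_unindexK.
Qed.

Lemma swE D i j : swapmx R D i j = (i == sw j)%:R.
Proof.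
rewrite /swapmx mxE; congr (_%:R).
case: (mxtens_indexP i) => i1 i2; case: (mxtens_indexP j) => j1 j2.
rewrite /sw !mxtens_indexK /= (inj_eq (can_inj (@mxtens_indexK _ _))) xpair_eqE.
by [].
Qed.

Lemma swap_conjE D (M : 'M[C]_(D * D)) i j :
  (swapmx R D *m M *m swapmx R D) i j = M (sw i) (sw j).
Proof.
rewrite mxE.
under eq_bigr => k _ do rewrite mxE swE.
rewrite sum_pick'.
under eq_bigr => l _ do rewrite swE eq_sym (canF_eq (@swK D)).
by rewrite sum_pick.
Qed.

Lemma swap_tens D (A B : 'M[C]_D) :
  swapmx R D *m (A *t B) *m swapmx R D = B *t A.
Proof.
apply/matrixP => i j; rewrite swap_conjE.
case: (mxtens_indexP i) => i1 i2; case: (mxtens_indexP j) => j1 j2.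
by rewrite /sw !mxtens_indexK /= !tensmxE mulrC.
Qed.

Lemma swap_swap D : swapmx R D *m swapmx R D = 1%:M.
Proof.
apply/matrixP => i j; have := swap_conjE (1%:M : 'M[C]_(D * D)) i j.
rewrite mulmx1 => ->.
by rewrite !mxE (inj_eq (can_inj (@swK D))).
Qed.

End Gen.

Section Main.
Variable R : rcfType.
Local Notation C := R[i].
Variable D : nat.
Variables (Om : 'M[C]_D) (psi : 'cV[C]_D).
Hypothesis Herm : adjmx Om = Om.
Hypothesis Opsd : psd Om.
Hypothesis Opsd1 : psd (1%:M - Om).
Hypothesis Opsi : Om *m psi = psi.
Hypothesis Upsi : unit_vector psi.
Hypothesis Rk1 : \rank (eigenspace Om 1) = 1%N.

Let U := spectralmx Om.
Let lam := spectral_diag Om.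

Lemma UU : U *m adjmx U = 1%:M.
Proof. exact/unitarymxP/spectral_unitarymx. Qed.
Lemma UU' : adjmx U *m U = 1%:M.
Proof. exact/mulmx1C/UU. Qed.

Lemma Om_dec : Om = adjmx U *m diag_mx lam *m U.
Proof.
have N : Om \is normalmx by apply/normalmxP; rewrite -[(Om ^t* )%sesqui]/(adjmx Om) Herm.
rewrite -[adjmx U](invmx_unitary (spectral_unitarymx Om)).
exact/orthomx_spectralP.
Qed.

Lemma UOm : U *m Om *m adjmx U = diag_mx lam.
Proof. by rewrite Om_dec !mulmxA UU mul1mx -mulmxA UU mulmx1. Qed.

Lemma UOm' : U *m Om = diag_mx lam *m U.
Proof. by rewrite -UOm -!mulmxA UU' mulmx1. Qed.

Lemma lam_ge0 i : 0 <= lam 0 i.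
Proof.
have := psd_diag U i Opsd; rewrite UOm !mxE eqxx mulr1n //.
Qed.

Lemma lam_le1 i : 0 <= 1 - lam 0 i.
Proof.
have := psd_diag U i Opsd1; rewrite mulmxBr mulmxBl mulmx1 UU UOm !mxE eqxx mulr1n //.
Qed.

Lemma eig_lam a : eigenvalue Om a -> exists i, a = lam 0 i.
Proof.
move=> /eigenvalueP [v Hv vn0].
set x := v *m adjmx U.
have Hx : x *m diag_mx lam = a *: x.
  by rewrite /x -UOm !mulmxA -[v *m adjmx U *m U]mulmxA UU' mulmx1 Hv scalemxAl.
have xn0 : x != 0.
  apply: contraNneq vn0 => x0; by rewrite -[v]mulmx1 -UU' mulmxA -/x x0 mul0mx.
have [j xj] : exists j, x 0 j != 0.
  apply/existsP; apply: contraNT xn0; rewrite negb_exists => /forallP H.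
  apply/eqP/matrixP => i j; rewrite ord1 [RHS]mxE; move: (H j); rewrite negbK => /eqP //.
exists j; move/matrixP: Hx => /(_ 0 j); rewrite mul_mx_diag mxE [(a *: x) 0 j]mxE => /eqP.
by rewrite (mulrC a) -subr_eq0 -mulrBr mulf_eq0 (negbTE xj) /= subr_eq0 => /eqP ->.
Qed.

Lemma lam_eig i : eigenvalue Om (lam 0 i).
Proof.
apply/eigenvalueP; exists (row i U).
  by rewrite -row_mul UOm' row_mul row_diag_mx -scalemxAl -rowE.
apply/negP => /eqP H.
have : (row i U *m adjmx U) = row i 1%:M by rewrite -row_mul UU.
rewrite H mul0mx => /rowP /(_ i); rewrite !mxE eqxx => /eqP; by rewrite eq_sym oner_eq0.
Qed.


Lemma row_eig i : row i U *m Om = lam 0 i *: row i U.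
Proof. by rewrite -row_mul UOm' row_mul row_diag_mx -scalemxAl -rowE. Qed.

Lemma lam_uniq i j : lam 0 i = 1 -> lam 0 j = 1 -> i = j.
Proof.
move=> li lj; apply/eqP; apply/negPn/negP => nij.
pose f := fun k : 'I_2 => if k == 0 then i else j.
pose X := rowsub f U.
have XX : X *m adjmx X = 1%:M.
  apply/matrixP => a b; rewrite !mxE.
  have -> : \sum_k X a k * adjmx X k b = (U *m adjmx U) (f a) (f b).
    by rewrite !mxE; apply: eq_bigr => k _; rewrite !adjmxE !mxE.
  rewrite UU !mxE; congr (_%:R).
  case: (a == b) /eqP => [<-|nab]; first by rewrite eqxx.
  suff : f a != f b by move/negbTE ->.
  apply/eqP => fab; apply: nab; apply/val_inj; move: a b fab; rewrite /f.
  case=> [[|[|//]]] ? [[|[|//]]] ? //= E.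
    by rewrite E eqxx in nij.
  by rewrite E eqxx in nij.
have rX : \rank X = 2%N by apply: mxrank_unitary; apply/unitarymxP.
have : (X <= eigenspace Om 1)%MS.
  apply/row_subP => k; rewrite row_rowsub; apply/eigenspaceP.
  by rewrite row_eig /f; case: (k == 0); rewrite ?li ?lj.
by move/mxrankS; rewrite rX Rk1.
Qed.

Let w := U *m psi.

Lemma lam_w i : lam 0 i * w i 0 = w i 0.
Proof.
have : U *m Om *m psi = w by rewrite -mulmxA Opsi.
by rewrite UOm' -mulmxA -/w mul_diag_mx => /matrixP /(_ i 0); rewrite mxE.
Qed.

Lemma w_norm : \sum_i Num.conj (w i 0) * w i 0 = 1.
Proof.
have : (adjmx w *m w) 0 0 = 1.
  by rewrite /w adjmxM mulmxA -(mulmxA (adjmx psi)) UU' mulmx1.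
by rewrite mxE => <-; apply: eq_bigr => k _; rewrite adjmxE.
Qed.

Lemma exists_i0 : exists i0, [/\ lam 0 i0 = 1, (forall j, j != i0 -> lam 0 j != 1)
  & U *m ketbra psi *m adjmx U = delta_mx i0 i0].
Proof.
have [i0 wi0] : exists i0, w i0 0 != 0.
  apply/existsP; apply: contraT; rewrite negb_exists => /forallP H.
  have := w_norm; rewrite big1 => [/eqP|k _]; first by rewrite eq_sym oner_eq0.
  by move: (H k); rewrite negbK => /eqP ->; rewrite mulr0.
have li0 : lam 0 i0 = 1.
  apply/eqP; have := lam_w i0; move/eqP; rewrite -subr_eq0 -{2}(mul1r (w i0 0)) -mulrBl.
  by rewrite mulf_eq0 (negbTE wi0) orbF subr_eq0.
have lj j : j != i0 -> lam 0 j != 1.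
  by move=> nj; apply: contra nj => /eqP lj; apply/eqP; apply: lam_uniq.
have wj j : j != i0 -> w j 0 = 0.
  move=> nj; apply/eqP; have := lam_w j; move/eqP; rewrite -subr_eq0 -{2}(mul1r (w j 0)) -mulrBl.
  by rewrite mulf_eq0 subr_eq0 (negbTE (lj j nj)).
have n1 : Num.conj (w i0 0) * w i0 0 = 1.
  rewrite -w_norm (bigD1 i0) //= big1 ?addr0 // => k nk; by rewrite wj // mulr0.
exists i0; split => //.
have -> : U *m ketbra psi *m adjmx U = w *m adjmx w by rewrite /ketbra /w adjmxM !mulmxA.
apply/matrixP => a b; rewrite !mxE big_ord1 adjmxE.
case: (a =P i0) => [->|na]; last by rewrite wj ?mul0r //; apply/eqP.
case: (b =P i0) => [->|nb]; last by rewrite (wj b) ?rmorph0 ?mulr0 ?(introF eqP nb) ?andbF //; apply/eqP.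
by rewrite mulrC n1.
Qed.

End Main.

Section Rho.
Variable R : rcfType.
Local Notation C := R[i].
Variable D : nat.
Variables (Om : 'M[C]_D) (psi : 'cV[C]_D).
Hypothesis Herm : adjmx Om = Om.
Variable i0 : 'I_D.
Hypothesis UP : spectralmx Om *m ketbra psi *m adjmx (spectralmx Om) = delta_mx i0 i0.

Let U := spectralmx Om.
Let lam := spectral_diag Om.
Let W := U *t U.
Let S := swapmx R D.

Lemma WW : W *m adjmx W = 1%:M.
Proof. by rewrite /W adjmxT tensmx_mul UU tens1mx. Qed.
Lemma WW' : adjmx W *m W = 1%:M.
Proof. exact/mulmx1C/WW. Qed.

Definition sigma (rho : 'M[C]_(D * D)) := W *m rho *m adjmx W.

Lemma tr_conj M rho : \tr (M *m rho) = \tr ((W *m M *m adjmx W) *m sigma rho).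
Proof.
have WW1 : adjmx W *m W = 1%:M := WW'.
rewrite /sigma !mulmxA -[W *m M *m adjmx W *m W]mulmxA WW1 mulmx1.
by rewrite [RHS]mxtrace_mulC !mulmxA WW1 mul1mx.
Qed.

Lemma WOm1 : W *m (Om *t 1%:M) *m adjmx W = diag_mx lam *t 1%:M.
Proof.
by rewrite /W adjmxT !tensmx_mul (UOm Herm) mulmx1 UU.
Qed.

Lemma WOmP : W *m (Om *t ketbra psi) *m adjmx W = diag_mx lam *t delta_mx i0 i0.
Proof.
by rewrite /W adjmxT !tensmx_mul (UOm Herm) UP.
Qed.

Lemma W11 : W *m 1%:M *m adjmx W = 1%:M.
Proof. by rewrite mulmx1 WW. Qed.

Lemma tr_diag n (N M : 'M[C]_n) : (forall i j, i != j -> N i j = 0) ->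
  \tr (N *m M) = \sum_k N k k * M k k.
Proof.
move=> Nd; rewrite /mxtrace; apply: eq_bigr => k _; rewrite mxE (bigD1 k) //= big1 ?addr0 //.
by move=> l lk; rewrite Nd ?mul0r // eq_sym.
Qed.

Lemma sum_pair (F : 'I_(D * D) -> C) :
  \sum_k F k = \sum_i \sum_j F (mxtens_index (i, j)).
Proof.
rewrite pair_big /=; apply: reindex => //=.
exists (@mxtens_unindex D D) => k _; [by rewrite mxtens_indexK; case: k | exact: mxtens_unindexK].
Qed.

Definition tt rho i j := sigma rho (mxtens_index (i, j)) (mxtens_index (i, j)).

Lemma tens_diag_off (a : 'rV[C]_D) (B : 'M[C]_D) : (forall i j, i != j -> B i j = 0) ->
  forall k l, k != l -> (diag_mx a *t B) k l = 0.
Proof.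
move=> Bd k l; case: (mxtens_indexP k) => k1 k2; case: (mxtens_indexP l) => l1 l2.
rewrite (inj_eq (can_inj (@mxtens_indexK _ _))) xpair_eqE tensmxE !mxE.
case: (k1 =P l1) => [->|nk] /=; last by rewrite mul0r.
by move=> nk2; rewrite Bd ?mulr0.
Qed.

Lemma p_formula rho : p_rho Om rho = \sum_i \sum_j lam 0 i * tt rho i j.
Proof.
rewrite /p_rho tr_conj WOm1 tr_diag; last first.
  by apply: tens_diag_off => i j /negbTE nij; rewrite mxE nij.
rewrite sum_pair; apply: eq_bigr => i _; apply: eq_bigr => j _.
by rewrite tensmxE /tt; congr (_ * _); rewrite !mxE !eqxx !mulr1n mulr1.
Qed.

Lemma f_formula rho : f_rho Om psi rho = \sum_i lam 0 i * tt rho i i0.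
Proof.
rewrite /f_rho tr_conj WOmP tr_diag; last first.
  apply: tens_diag_off => i j /negbTE nij; rewrite mxE.
  by case: (i =P i0) => [E|] //=; rewrite -E eq_sym nij.
rewrite sum_pair; apply: eq_bigr => i _; rewrite (bigD1 i0) //= big1 ?addr0.
  by rewrite tensmxE /tt; congr (_ * _); rewrite !mxE !eqxx !mulr1n mulr1.
by move=> j /negbTE nj; rewrite tensmxE [delta_mx _ _ _ _]mxE nj mulr0 mul0r.
Qed.

Lemma tr_formula rho : \tr rho = \sum_i \sum_j tt rho i j.
Proof.
have := tr_conj 1%:M rho; rewrite mul1mx W11 mul1mx => ->.
rewrite -[sigma rho]mul1mx tr_diag; last first.
  by move=> i j nij; rewrite mxE; move: nij; case: (i == j).
by rewrite sum_pair; apply: eq_bigr => i _; apply: eq_bigr => j _; rewrite [1%:M _ _]mxE eqxx mul1r.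
Qed.

Lemma tt_ge0 rho i j : psd rho -> 0 <= tt rho i j.
Proof. by move=> H; apply: psd_diag. Qed.

Lemma SS : S *m S = 1%:M. Proof. exact: swap_swap. Qed.

Lemma SWS : S *m W *m S = W. Proof. exact: swap_tens. Qed.
Lemma SWS' : S *m adjmx W *m S = adjmx W. Proof. by rewrite /W adjmxT swap_tens. Qed.

Lemma conjS (A B E : 'M[C]_(D * D)) :
  S *m (A *m B *m E) *m S = (S *m A *m S) *m (S *m B *m S) *m (S *m E *m S).
Proof.
by rewrite !mulmxA -[S *m A *m S *m S]mulmxA SS mulmx1 -[S *m A *m B *m S *m S]mulmxA SS mulmx1.
Qed.

Lemma tt_sym rho i j : perm_invariant rho -> tt rho i j = tt rho j i.
Proof.
move=> Hp.
have E : tt rho j i = (S *m sigma rho *m S) (mxtens_index (i, j)) (mxtens_index (i, j)).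
  by rewrite swap_conjE /sw mxtens_indexK.
have h1 : S *m W *m S = W := SWS.
have h2 : S *m adjmx W *m S = adjmx W := SWS'.
by rewrite E /sigma conjS h1 h2 Hp.
Qed.


Section Build.
Variable h : 'I_D -> 'I_D -> C.
Hypothesis h_ge0 : forall i j, 0 <= h i j.
Hypothesis h_sym : forall i j, h i j = h j i.

Let g := \row_k h (mxtens_unindex k).1 (mxtens_unindex k).2.
Definition rho0 := adjmx W *m diag_mx g *m W.

Lemma sigma_rho0 : sigma rho0 = diag_mx g.
Proof.
have WW1 : adjmx W *m W = 1%:M := WW'.
have WW2 : W *m adjmx W = 1%:M := WW.
by rewrite /sigma /rho0 !mulmxA WW2 mul1mx -mulmxA WW2 mulmx1.
Qed.

Lemma tt_rho0 i j : tt rho0 i j = h i j.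
Proof. by rewrite /tt sigma_rho0 !mxE eqxx mulr1n mxtens_indexK. Qed.

Lemma psd_rho0 : psd rho0.
Proof.
move=> v; rewrite /rho0.
have -> : adjmx v *m (adjmx W *m diag_mx g *m W) *m v
   = adjmx (W *m v) *m diag_mx g *m (W *m v) by rewrite adjmxM !mulmxA.
rewrite mxE; apply: sumr_ge0 => k _; rewrite mul_mx_diag !mxE mulrAC.
apply: mulr_ge0; last by apply: h_ge0.
by rewrite mulrC mul_conjC_ge0.
Qed.

Lemma perm_rho0 : perm_invariant rho0.
Proof.
have h1 : S *m W *m S = W := SWS.
have h2 : S *m adjmx W *m S = adjmx W := SWS'.
rewrite /perm_invariant /rho0 -/S conjS h1 h2.
congr (_ *m _ *m _); apply/matrixP => a b; rewrite swap_conjE !mxE.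
rewrite (inj_eq (can_inj (@swK D))); case: (a == b) => //.
by rewrite /sw mxtens_indexK /= h_sym.
Qed.

Lemma tr_rho0 : \tr rho0 = \sum_i \sum_j h i j.
Proof. by rewrite tr_formula; apply: eq_bigr => i _; apply: eq_bigr => j _; rewrite tt_rho0. Qed.

End Build.

End Rho.
Lemma LP_sums (R : realFieldType) D (i0 : 'I_D) (l : 'I_D -> R) (t : 'I_D -> 'I_D -> R) (beta tau : R) :
  l i0 = 1 -> (forall j, j != i0 -> tau <= l j <= beta) -> (forall i j, 0 <= t i j) ->
  (forall i j, t i j = t j i) ->
  exists a b x y c, [/\ 0 <= a, 0 <= b, 0 <= c, \sum_i \sum_j t i j = a + b + b + c &
     tau * b <= x] /\ [/\ y <= beta * c,
     \sum_i \sum_j l i * t i j = a + b + x + y & \sum_i l i * t i i0 = a + x].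
Proof.
move=> li0 lb t0 ts.
exists (t i0 i0), (\sum_(j | j != i0) t i0 j), (\sum_(i | i != i0) l i * t i i0),
  (\sum_(i | i != i0) \sum_(j | j != i0) l i * t i j),
  (\sum_(i | i != i0) \sum_(j | j != i0) t i j).
have bb : \sum_(j | j != i0) t i0 j = \sum_(i | i != i0) t i i0.
  by apply: eq_bigr => i _; rewrite ts.
split; split.
- exact: t0.
- by apply: sumr_ge0 => j _.
- by apply: sumr_ge0 => i _; apply: sumr_ge0 => j _.
- rewrite (bigD1 i0) //= (bigD1 i0) //= -!addrA; congr (_ + _); congr (_ + _).
  rewrite bb -big_split /=; apply: eq_bigr => i _; rewrite (bigD1 i0) //=.
- rewrite bb mulr_sumr; apply: ler_sum => i ni; apply: ler_wpM2r => //.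
  by case/andP: (lb i ni).
- rewrite mulr_sumr; apply: ler_sum => i ni; rewrite mulr_sumr; apply: ler_sum => j _.
  apply: ler_wpM2r => //; by case/andP: (lb i ni).
- rewrite (bigD1 i0) //= li0.
  under eq_bigr => j _ do rewrite mul1r.
  rewrite (bigD1 i0) //= -!addrA; congr (_ + _); congr (_ + _).
  rewrite -big_split /=; apply: eq_bigr => i _; rewrite (bigD1 i0) //=.
- by rewrite (bigD1 i0) //= li0 mul1r.
Qed.
Lemma arith (R : realFieldType) (a b x y c P beta tau eps delta : R) :
  0 <= a -> 0 <= b -> 0 <= c -> 1 = a + b + b + c -> tau * b <= x -> y <= beta * c ->
  P = a + b + x + y -> 0 <= tau -> 0 < beta -> beta < delta -> delta <= 1/2 -> 0 < eps -> eps < 1 ->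
  delta * (1 - eps) * (1 + tau - 2 * beta) <= tau * (delta - beta) -> delta <= P ->
  (1 - eps) * P <= a + x.
Proof.
move=> a0 b0 c0 tot xb yc hP t0 b0' bd d2 e0 e1 H dP.
have [s sE] : exists s, s = 1 + tau - 2 * beta by eexists.
rewrite -sE in H.
have s0 : 0 < s by rewrite sE; lra.
have [z zE] : exists z, z = (1 - beta) * a + x + (1 - 2 * beta) * b by eexists.
have cE : c = 1 - a - 2 * b by lra.
rewrite cE in yc.
have Pz : P <= beta + z by rewrite zE hP; nra.
have zd : delta - beta <= z by lra.
have h1 : 0 <= a * (tau * beta) by apply: mulr_ge0 => //; apply: mulr_ge0 => //; lra.
have h2 : 0 <= (1 - 2 * beta) * (x - tau * b) by apply: mulr_ge0; lra.
have h3 : 0 <= (1 - 2 * beta) * a by apply: mulr_ge0; lra.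
have E1 : tau * z <= s * (a + x) by rewrite zE sE; nra.
have E2 : (1 - eps) * P <= (1 - eps) * (beta + z) by nra.
have bz : 0 <= beta + z by lra.
have E3 : delta * s * ((1 - eps) * (beta + z)) <= tau * (delta - beta) * (beta + z).
  have H' := ler_wpM2r bz H.
  have -> : delta * s * ((1 - eps) * (beta + z)) = delta * (1 - eps) * s * (beta + z) by ring.
  exact: H'.
have h4 : 0 <= tau * beta * (beta + z - delta) by apply: mulr_ge0; [apply: mulr_ge0|]; lra.
have E4 : tau * (delta - beta) * (beta + z) <= tau * delta * z by nra.
have E5 : tau * delta * z <= delta * s * (a + x).
  have -> : tau * delta * z = delta * (tau * z) by ring.
  rewrite -mulrA ler_wpM2l //; lra.
have ds : 0 < delta * s by nra.
have : (1 - eps) * (beta + z) <= a + x.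
  by rewrite -(ler_pM2l ds); lra.
lra.
Qed.

Section Final.
Variable R : rcfType.
Local Notation C := R[i].

Lemma ge0_real (z : C) : 0 <= z -> z = (complex.Re z)%:C.
Proof. by case: z => a b; rewrite lecE /= => /andP [/eqP -> _]. Qed.

Lemma sum_ind2 n (a b : 'I_n) (F : 'I_n -> 'I_n -> C) :
  \sum_i \sum_j F i j * ((i == a) && (j == b))%:R = F a b.
Proof.
rewrite (bigD1 a) //= [X in _ + X]big1 ?addr0; last first.
  move=> i /negbTE ni; apply: big1 => j _; by rewrite ni mulr0.
rewrite (bigD1 b) //= [X in _ + X]big1 ?addr0 ?eqxx ?mulr1 // => j /negbTE ->.
by rewrite andbF mulr0.
Qed.

Lemma build D (Om : 'M[C]_D) (psi : 'cV[C]_D) (Herm : adjmx Om = Om) (i0 : 'I_D)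
  (UP : spectralmx Om *m ketbra psi *m adjmx (spectralmx Om) = delta_mx i0 i0)
  (jt jb : 'I_D) (B : R) :
  jt != i0 -> jb != i0 -> 0 <= B -> B <= 1 / 2 ->
  exists rho, [/\ density rho, perm_invariant rho,
    p_rho Om rho = B%:C * spectral_diag Om 0 i0 + B%:C * spectral_diag Om 0 jt
                   + (1 - 2 * B)%:C * spectral_diag Om 0 jb
    & f_rho Om psi rho = B%:C * spectral_diag Om 0 jt].
Proof.
move=> jti jbi B0 B2.
pose h (i j : 'I_D) := B%:C * ((i == i0) && (j == jt))%:R + B%:C * ((i == jt) && (j == i0))%:R
   + (1 - 2 * B)%:C * ((i == jb) && (j == jb))%:R.
have hsum (F : 'I_D -> 'I_D -> C) : \sum_i \sum_j F i j * h i j =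
   B%:C * F i0 jt + B%:C * F jt i0 + (1 - 2 * B)%:C * F jb jb.
  rewrite -!sum_ind2 !mulr_sumr -!big_split /=; apply: eq_bigr => i _.
  rewrite !mulr_sumr -!big_split /=; apply: eq_bigr => j _.
  by rewrite /h; ring.
have h0 i j : 0 <= h i j.
  rewrite /h; apply: addr_ge0; first apply: addr_ge0; apply: mulr_ge0; rewrite ?ler0n ?ler0c //.
  lra.
have hs i j : h i j = h j i.
  by rewrite /h [(j == i0) && _]andbC [(j == jt) && _]andbC [(j == jb) && _]andbC; congr (_ + _); rewrite addrC.
exists (rho0 Om h); split.
- split; first exact: psd_rho0.
  rewrite tr_rho0.
  have := hsum (fun _ _ => 1); rewrite !mulr1.
  under eq_bigr => i _ do under eq_bigr => j _ do rewrite mul1r.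
  move=> ->; rewrite -!rmorphD /=; congr (_%:C); lra.
- exact: perm_rho0.
- rewrite (p_formula Herm); under eq_bigr => i _ do under eq_bigr => j _ do rewrite tt_rho0.
  by rewrite hsum.
- rewrite (f_formula Herm UP); under eq_bigr => i _ do rewrite tt_rho0.
  rewrite -(sum_pick' jt (fun i => B%:C * spectral_diag Om 0 i)); apply: eq_bigr => i _.
  rewrite /h eqxx andbT [i0 == jt]eq_sym (negbTE jti) andbF mulr0 add0r.
  rewrite [i0 == jb]eq_sym (negbTE jbi) andbF mulr0 addr0; ring.
Qed.


Lemma rho_facts D (Om : 'M[C]_D) (psi : 'cV[C]_D) (Herm : adjmx Om = Om) (Hp : psd Om)
  (i0 : 'I_D)
  (UP : spectralmx Om *m ketbra psi *m adjmx (spectralmx Om) = delta_mx i0 i0)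
  (rho : 'M[C]_(D * D)) : density rho -> perm_invariant rho ->
  exists t : 'I_D -> 'I_D -> R, [/\ (forall i j, 0 <= t i j), (forall i j, t i j = t j i),
    \sum_i \sum_j t i j = 1,
    p_rho Om rho = (\sum_i \sum_j complex.Re (spectral_diag Om 0 i) * t i j)%:C
  & f_rho Om psi rho = (\sum_i complex.Re (spectral_diag Om 0 i) * t i i0)%:C].
Proof.
move=> [Hpsd Htr] Hpi.
pose t i j := complex.Re (tt Om rho i j).
have ttE i j : tt Om rho i j = (t i j)%:C by apply: ge0_real; apply: tt_ge0.
have lamE i : spectral_diag Om 0 i = (complex.Re (spectral_diag Om 0 i))%:C.
  by apply: ge0_real; apply: lam_ge0.
exists t; split.
- by move=> i j; rewrite -ler0c -ttE; apply: tt_ge0.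
- by move=> i j; rewrite /t tt_sym.
- apply: (@complexI R); rewrite rmorph_sum /= rmorph1 -Htr (tr_formula Om).
  by apply: eq_bigr => i _; rewrite rmorph_sum; apply: eq_bigr => j _; rewrite ttE.
- rewrite (p_formula Herm) rmorph_sum; apply: eq_bigr => i _; rewrite rmorph_sum.
  by apply: eq_bigr => j _; rewrite [in LHS]lamE [in LHS]ttE rmorphM.
- rewrite (f_formula Herm UP) rmorph_sum; apply: eq_bigr => i _.
  by rewrite [in LHS]lamE [in LHS]ttE rmorphM.
Qed.

End Final.

Unset Implicit Arguments.
Set Strict Implicit.

Theorem corollary7 (R : realType) (D : nat) (Om : 'M[R[i]]_D) (psi : 'cV[R[i]]_D)
  (beta tau eps delta : R) :
  (1 < D)%N ->
  verification_operator Om psi ->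
  (* beta is the second largest eigenvalue of Om (1 being the largest, simple) *)
  eigenvalue Om beta%:C -> beta != 1 ->
  (forall a : R[i], eigenvalue Om a -> a != 1 -> a <= beta%:C) ->
  (* tau is the smallest eigenvalue of Om *)
  eigenvalue Om tau%:C ->
  (forall a : R[i], eigenvalue Om a -> tau%:C <= a) ->
  0 < eps < 1 -> 0 < delta <= 1 / 2 ->
  (1 - eps <= F1 delta Om psi <->
   (0 < beta < delta /\
    delta * (1 - eps) <= tau * (delta - beta) / (1 + tau - 2 * beta))).
Proof.
move=> hD [Hu Hh [Hp Hp1] Hpsi Hrk] Hbe hb1 Hbmax Hte Htmin /andP[e0 e1] /andP[d0 d2].
have [i0 [li0 lne UP]] := exists_i0 Hh Hpsi Hu Hrk.
pose l i := complex.Re (spectral_diag Om 0 i).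
have lamE i : spectral_diag Om 0 i = (l i)%:C.
  by apply: ge0_real; apply: lam_ge0.
have l_ge0 i : 0 <= l i by rewrite -ler0c -lamE; apply: lam_ge0.
have l_le1 i : l i <= 1.
  have h := lam_le1 Hh Hp1 i; rewrite lamE in h.
  have : (0 : R[i]) <= (1 - l i)%:C by rewrite rmorphB rmorph1.
  by rewrite ler0c subr_ge0.
have li01 : l i0 = 1 by apply: (@complexI R); rewrite -lamE li0.
have [jb jbE] := eig_lam Hh Hbe.
have [jt jtE] := eig_lam Hh Hte.
have bE : beta = l jb by apply: (@complexI R); rewrite jbE lamE.
have tE : tau = l jt by apply: (@complexI R); rewrite jtE lamE.
have jbi : jb != i0 by apply: contra hb1 => /eqP E; rewrite bE E li01.
have tb : tau <= beta by have := Htmin _ Hbe; rewrite lecR.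
have b1 : beta < 1 by rewrite lt_neqAle hb1 bE l_le1.
have jti : jt != i0 by apply/eqP => E; move: tb; rewrite tE E li01; lra.
have lbnd j : j != i0 -> tau <= l j <= beta.
  move=> nj; have e := lam_eig Hh j; have h1 := Htmin _ e; have h2 := Hbmax _ e (lne j nj).
  by rewrite lamE lecR in h1; rewrite lamE lecR in h2; rewrite h1 h2.
have t0 : 0 <= tau by rewrite tE.
have b0 : 0 <= beta by rewrite bE.
pose S := [set x : R | exists rho : 'M[R[i]]_(D * D),
         [/\ density rho, perm_invariant rho, delta%:C <= p_rho Om rho
           & x%:C = f_rho Om psi rho / p_rho Om rho]]%classic.
have Sfacts x : S x -> exists t : 'I_D -> 'I_D -> R,
    [/\ (forall i j, 0 <= t i j), (forall i j, t i j = t j i),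
    \sum_i \sum_j t i j = 1, delta <= \sum_i \sum_j l i * t i j
  & x = (\sum_i l i * t i i0) / (\sum_i \sum_j l i * t i j)].
  move=> [rho [Hd Hpi Hdp Hx]].
  have [t [t0' ts tsum pE fE]] := rho_facts Hh Hp UP Hd Hpi.
  exists t; split => //; first by rewrite -lecR -pE.
  by apply: (@complexI R); rewrite Hx pE fE fmorph_div.
have S_ge0 : has_lbound S.
  exists 0 => x /Sfacts [t [t0' _ _ dP ->]].
  apply: divr_ge0; first by apply: sumr_ge0 => i _; apply: mulr_ge0.
  lra.
have Sbuild (B : R) : 0 <= B -> B <= 1 / 2 -> delta <= B + B * tau + (1 - 2 * B) * beta ->
    S (B * tau / (B + B * tau + (1 - 2 * B) * beta)).
  move=> B0 B2 dP.
  have [rho [Hd Hpi pE fE]] := build Hh UP jti jbi B0 B2.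
  have pE' : p_rho Om rho = (B + B * tau + (1 - 2 * B) * beta)%:C.
    by rewrite pE !lamE li01 -tE -bE -!rmorphM -!rmorphD /= mulr1.
  exists rho; split => //; first by rewrite pE' lecR.
  by rewrite pE' fE lamE -tE -rmorphM fmorph_div.
rewrite /F1 -/S; split.
- move=> HF.
  have key (B : R) : 0 <= B -> B <= 1 / 2 -> delta <= B + B * tau + (1 - 2 * B) * beta ->
      1 - eps <= B * tau / (B + B * tau + (1 - 2 * B) * beta).
    move=> B0 B2 dP; apply: (le_trans HF); exact: ge_inf (Sbuild B B0 B2 dP).
  have bpos : 0 < beta.
    rewrite lt_neqAle b0 andbT; apply/negP => /eqP b00.
    have t00 : tau = 0 by lra.
    have := key (1 / 2); rewrite t00 -b00 !mulr0 mul0r; lra.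
  have bd : beta < delta.
    rewrite ltNge; apply/negP => db.
    have := key 0; rewrite !mul0r; lra.
  split; first by rewrite bpos bd.
  have s0 : 0 < 1 + tau - 2 * beta by lra.
  pose B := (delta - beta) / (1 + tau - 2 * beta).
  have BsE : B * (1 + tau - 2 * beta) = delta - beta by rewrite /B mulfVK // gt_eqF.
  have B0 : 0 <= B by rewrite /B; apply: divr_ge0; lra.
  have B2 : B <= 1 / 2.
    rewrite /B ler_pdivrMr //; lra.
  have PE : B + B * tau + (1 - 2 * B) * beta = delta.
    have -> : B + B * tau + (1 - 2 * B) * beta = beta + B * (1 + tau - 2 * beta) by ring.
    rewrite BsE; ring.
  have := key B B0 B2; rewrite PE => /(_ (lexx _)).
  rewrite ler_pdivlMr; last lra.
  move=> H; rewrite (mulrC delta).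
  have -> : tau * (delta - beta) / (1 + tau - 2 * beta) = B * tau by rewrite /B [tau * _]mulrC mulrAC.
  exact: H.
- move=> [/andP [bpos bd] Hc].
  apply: lb_le_inf.
    exists (1 / 2 * tau / (1 / 2 + 1 / 2 * tau + (1 - 2 * (1 / 2)) * beta)).
    apply: Sbuild; lra.
  move=> x /Sfacts [t [t0' ts tsum dP ->]].
  have [a [b [xx [y [c [[a0 b0' c0 tot xb] [yc pE fE]]]]]]] := LP_sums li01 lbnd t0' ts.
  have P0 : 0 < \sum_i \sum_j l i * t i j by lra.
  rewrite ler_pdivlMr // pE fE.
  have s0 : 0 < 1 + tau - 2 * beta by lra.
  have H1 : 1 = a + b + b + c by rewrite -tot tsum.
  have H2 : delta * (1 - eps) * (1 + tau - 2 * beta) <= tau * (delta - beta).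
    by rewrite -ler_pdivlMr.
  have H3 : delta <= a + b + xx + y by rewrite -pE.
  exact: (@arith _ a b xx y c (a + b + xx + y) beta tau eps delta a0 b0' c0 H1 xb yc
     erefl t0 bpos bd d2 e0 e1 H2 H3).
Qed.
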